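(* Let $A=(a_{jk})\in\mathbb C^{6\times 6}$ be a hermitian matrix such that $\bar zAz^T\geq 0$ for all $z\in\mathbb C^6$ with $z_1z_6+z_2z_5+z_3z_4=0$. Then $$\sum_{j,k=1}^{6}a_{jk}\,a_{7-j,7-k}\geq 0.$$ *)

(* Defs.v *)
From HB Require Import structures.
From mathcomp Require Import all_boot all_order all_algebra.
From mathcomp Require Import reals.
From mathcomp Require Export complex.
Set Implicit Arguments. Unset Strict Implicit. Unset Printing Implicit Defensive.
Import Order.TTheory GRing.Theory Num.Theory.
Local Open Scope ring_scope.
Local Open Scope complex_scope.

(* Indices 'I_6 = {0..5} stand for 1..6,
   so index 7-j corresponds to rev_ord j (value 5 - j). *)

Definition is_hermitian6 (R : rcfType) (A : 'M[R[i]]_6) : Prop :=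
  forall j k : 'I_6, A k j = (A j k)^*.

Definition herm_form (R : rcfType) (A : 'M[R[i]]_6) (z : 'rV[R[i]]_6) : R[i] :=
  \sum_(j < 6) \sum_(k < 6) (z 0 j)^* * A j k * z 0 k.

(* Main.v *)
Require Import Defs.
From HB Require Import structures.
From mathcomp Require Import all_boot all_order all_algebra.
From mathcomp Require Import reals.
From mathcomp Require Import sesquilinear spectral ring.
Import Order.TTheory GRing.Theory Num.Theory.
Local Open Scope ring_scope.
Local Open Scope sesquilinear_scope.
Section T.
Variable R : realType.
Local Notation C := (R[i]).
Variable A : 'M[C]_6.
Hypothesis hA : is_hermitian6 A.

Definition Bm : 'M[C]_6 := \matrix_(j, k) Num.conj (A (rev_ord j) (rev_ord k)).
Definition Hm := A - Bm.

Lemma hA' j k : Num.conj (A j k) = A k j.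
Proof. by rewrite (hA j k). Qed.

Lemma Hm_herm : Hm \is hermsymmx.
Proof.
by rewrite qualifE; apply/eqP/matrixP => j k; rewrite !mxE /= expr0 mul1r rmorphB /= !hA'.
Qed.

Let P := spectralmx Hm.
Let d := spectral_diag Hm.
Lemma Pu : P \is unitarymx. Proof. exact: spectral_unitarymx. Qed.
Lemma Punit : P \in unitmx. Proof. exact: spectral_unit. Qed.
Lemma HE : Hm = invmx P *m diag_mx d *m P.
Proof. exact/orthomx_spectralP/hermitian_normalmx/Hm_herm. Qed.
Lemma PPt : P *m P^t* = 1%:M.
Proof. by apply/eqP; have := Pu. Qed.
Lemma PtP : P^t* *m P = 1%:M.
Proof. by rewrite -(invmx_unitary Pu) mulVmx // Punit. Qed.
Let Ap := P *m A *m P^t*.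
Let Bp := P *m Bm *m P^t*.
Lemma Dg : Ap - Bp = diag_mx d.
Proof.
rewrite /Ap /Bp -mulmxBl -mulmxBr -/Hm HE !mulmxA mulmxV ?Punit // mul1mx.
by rewrite -mulmxA PPt mulmx1.
Qed.
Lemma trE : \tr (Ap *m Bp) = \tr (A *m Bm).
Proof.
rewrite /Ap /Bp !mulmxA -[P *m A *m P^t* *m P]mulmxA PtP mulmx1.
by rewrite mxtrace_mulC !mulmxA PtP mul1mx.
Qed.
Lemma sumE : \sum_(j < 6) \sum_(k < 6) A j k * A (rev_ord j) (rev_ord k) = \tr (A *m Bm).
Proof.
rewrite /mxtrace; apply: eq_bigr => j _; rewrite mxE; apply: eq_bigr => k _.
by rewrite !mxE hA'.
Qed.
Lemma At : A^t* = A.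
Proof. by apply/matrixP => j k; rewrite !mxE hA'. Qed.
Lemma Apt : Ap^t* = Ap.
Proof.
rewrite /Ap !trmx_mul !map_mxM trmxCK At mulmxA.
by [].
Qed.
Lemma Ap_herm i j : Ap j i = (Ap i j)^*.
Proof. by rewrite -{1}Apt !mxE. Qed.
Lemma Bp_off i j : i != j -> Bp i j = Ap i j.
Proof.
move=> ij; have /matrixP/(_ i j) := Dg.
by rewrite !mxE (negbTE ij) mulr0n => /eqP; rewrite subr_eq0 => /eqP.
Qed.
Lemma Bp_diag i : Bp i i = Ap i i - d 0 i.
Proof.
have /matrixP/(_ i i) := Dg.
by rewrite !mxE eqxx mulr1n => <-; rewrite opprB addrC subrK.
Qed.
Lemma sum6 (f : 'I_6 -> R[i]) : \sum_(b < 6) f b * f (rev_ord b) = 2 * (f 0 * f 5 + f 1 * f 4 + f 2 * f 3).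
Proof.
rewrite !big_ord_recl big_ord0 /=.
have E (a b : 'I_6) : val a = val b -> f a = f b by move/val_inj->.
rewrite (E (rev_ord ord0) 5) // (E ord0 0) // (E (lift ord0 ord0) 1) //
  (E (rev_ord (lift ord0 ord0)) 4) // (E (lift ord0 (lift ord0 ord0)) 2) //
  (E (rev_ord (lift ord0 (lift ord0 ord0))) 3) //
  (E (lift ord0 (lift ord0 (lift ord0 ord0))) 3) //
  (E (rev_ord (lift ord0 (lift ord0 (lift ord0 ord0)))) 2) //
  (E (lift ord0 (lift ord0 (lift ord0 (lift ord0 ord0)))) 4) //
  (E (rev_ord (lift ord0 (lift ord0 (lift ord0 (lift ord0 ord0))))) 1) //
  (E (lift ord0 (lift ord0 (lift ord0 (lift ord0 (lift ord0 ord0))))) 5) //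
  (E (rev_ord (lift ord0 (lift ord0 (lift ord0 (lift ord0 (lift ord0 ord0)))))) 0) //.
ring.
Qed.
Lemma antisum (x : 'I_6 -> C) (F : 'I_6 -> 'I_6 -> C) :
  \sum_(a < 6) \sum_(c < 6) x a * x c * (F a c - F c a) = 0.
Proof.
under eq_bigr do under eq_bigr do rewrite mulrBr.
under eq_bigr do rewrite sumrB.
rewrite sumrB; apply/eqP; rewrite subr_eq0; apply/eqP.
rewrite exchange_big /=; apply: eq_bigr => a _; apply: eq_bigr => c _.
by rewrite [x c * _]mulrC.
Qed.
Lemma PH : P *m Hm = diag_mx d *m P.
Proof. by rewrite HE !mulmxA mulmxV ?Punit // mul1mx. Qed.
Lemma iso i : d 0 i != 0 -> P i 0 * P i 5 + P i 1 * P i 4 + P i 2 * P i 3 = 0.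
Proof.
move=> di.
have : d 0 i * \sum_(b < 6) P i b * P i (rev_ord b) = 0.
  rewrite mulr_sumr.
  have e b : d 0 i * P i b = \sum_(a < 6) P i a * Hm a b.
    by have /matrixP/(_ i b) := PH; rewrite mul_diag_mx !mxE.
  under eq_bigr do rewrite mulrA e mulr_suml.
  rewrite exchange_big /=.
  rewrite -[RHS](antisum (P i) (fun a c => A a (rev_ord c))).
  apply: eq_bigr => a _.
  rewrite (reindex_inj rev_ord_inj) /=; apply: eq_bigr => c _.
  rewrite rev_ordK !mxE rev_ordK hA'.
  by rewrite mulrAC.
rewrite sum6 => /eqP; rewrite !mulf_eq0 (negbTE di) /= pnatr_eq0 /=.
by move/eqP.
Qed.
Lemma Ap_form i : Ap i i = herm_form A (\row_j (P i j)^*).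
Proof.
rewrite /herm_form /Ap !mxE.
under eq_bigr do rewrite !mxE mulr_suml.
rewrite exchange_big /=; apply: eq_bigr => l _; apply: eq_bigr => k _.
by rewrite !mxE conjCK.
Qed.
Lemma Bp_form i : Bp i i = (herm_form A (\row_j P i (rev_ord j)))^*.
Proof.
rewrite /herm_form /Bp !mxE rmorph_sum.
under eq_bigr do rewrite !mxE mulr_suml.
rewrite exchange_big /= (reindex_inj rev_ord_inj) /=; apply: eq_bigr => l _.
rewrite rmorph_sum (reindex_inj rev_ord_inj) /=; apply: eq_bigr => k _.
by rewrite !mxE !rev_ordK !rmorphM /= conjCK.
Qed.
Hypothesis hq : forall z : 'rV[C]_6,
      z 0 0 * z 0 5 + z 0 1 * z 0 4 + z 0 2 * z 0 3 = 0 ->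
      0 <= herm_form A z.
Lemma diag_ge0 i : 0 <= Ap i i * Bp i i.
Proof.
case: (eqVneq (d 0 i) 0) => [d0|dn].
  rewrite Bp_diag d0 subr0.
  have e : Ap i i = (Ap i i)^* by exact: Ap_herm.
  by rewrite {2}e; exact: mul_conjC_ge0.
apply: mulr_ge0.
  rewrite Ap_form; apply: hq; rewrite !mxE -!rmorphM -!rmorphD /= iso //.
  by rewrite rmorph0.
rewrite Bp_form conjC_ge0; apply: hq; rewrite !mxE.
have E (a b : 'I_6) : val a = val b -> P i a = P i b by move/val_inj->.
rewrite (E (rev_ord 0) 5) // (E (rev_ord 1) 4) // (E (rev_ord 2) 3) //
  (E (rev_ord 3) 2) // (E (rev_ord 4) 1) // (E (rev_ord 5) 0) //.
rewrite -(iso i dn); ring.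
Qed.
Lemma main : 0 <= \tr (A *m Bm).
Proof.
rewrite -trE /mxtrace; apply: sumr_ge0 => i _; rewrite mxE (bigD1 i) //=.
apply: addr_ge0; first exact: diag_ge0.
apply: sumr_ge0 => j ji; rewrite (Bp_off j i ji) (Ap_herm i j).
exact: mul_conjC_ge0.
Qed.
End T.

Theorem theorem5 (R : realType) (A : 'M[R[i]]_6) :
  is_hermitian6 A ->
  (forall z : 'rV[R[i]]_6,
      z 0 0 * z 0 5 + z 0 1 * z 0 4 + z 0 2 * z 0 3 = 0 ->
      0 <= herm_form A z) ->
  0 <= \sum_(j < 6) \sum_(k < 6) A j k * A (rev_ord j) (rev_ord k).
Proof. by move=> hA hq; rewrite sumE //; exact: main. Qed.
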